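(* Let $u_F>0$, $U_F=(-u_F,u_F)^n$, and let $F: \mathbb{R}^m \to U_F$ be a continuous semialgebraic function. Then there exist $\mathcal{N} \in ISDnet(m,n,1)$ and $c_{\max} > 0$ such that $\mathrm{SANN}^{lim}(\mathcal{N}, x, c_{\max}) = F(x)$ for all $x\in\mathbb{R}^m$.
   Context: For $D \subseteq \mathbb{R}^N$, $ISD(D)$ is the smallest set of functions $D \to \mathbb{R}$ containing all restrictions of real polynomials and closed under pointwise $\min$ and $\max$; vector/matrix-valued functions are ISD if all entries are. $ISDnet(m,n,k) := ISD(\mathbb{R}^m\times\mathbb{R}^{n+k}\times\mathbb{R},\ \mathbb{R}^{(n+k)\times(n+k)}\times\mathbb{R}^{n+k})$; for $\mathcal N$ in it write $\mathcal N(x,z,s) = (M(x,z,s), b(x,z,s))$. For $c>0$, $\mathrm{clamp\text{-}sol}_c(M,b) := \mathrm{clamp}(M^{-1}b,-c,c)$ if $M$ is invertible and $0$ otherwise, where $\mathrm{clamp}(a,-c,c)$ replaces each component $a_i$ by $\min(\max(a_i,-c),c)$. The limit SANN $\mathrm{SANN}^{lim}(\mathcal N,x,c_{\max})$ is the vector of the first $n$ components of $z(1)$, where $z:[0,1]\to\mathbb{R}^{n+k}$ is the (exact) solution of $\dot z(s) = \mathrm{clamp\text{-}sol}_{c_{\max}}(M(x,z(s),s), b(x,z(s),s))$, $z(0)=0$. A semialgebraic function is one whose graph is a semialgebraic set. *)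

(* Defs.v *)
From HB Require Import structures.
From mathcomp Require Import all_boot all_order all_algebra.
From mathcomp Require Import all_classical all_reals all_analysis.
From mathcomp Require mpoly.
Set Implicit Arguments. Unset Strict Implicit. Unset Printing Implicit Defensive.
Import Order.TTheory GRing.Theory Num.Theory.
Import numFieldNormedType.Exports.
Local Open Scope ring_scope.

Section Defs.
Variable R : realType.

Definition polyfun (N : nat) (p : mpoly.mpoly N R) : ('I_N -> R) -> R :=
  fun v => mpoly.meval v p.

Inductive ISD (N : nat) : (('I_N -> R) -> R) -> Prop :=
| ISD_poly (p : mpoly.mpoly N R) : ISD (polyfun p)
| ISD_min f g : ISD f -> ISD g -> ISD (fun v => Num.min (f v) (g v))
| ISD_max f g : ISD f -> ISD g -> ISD (fun v => Num.max (f v) (g v)).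

(* decoding a point of R^m x R^(n+k) x R  =  R^(m + (n+k) + 1) *)
Definition xof (m p : nat) (v : 'I_(m + p + 1) -> R) : 'cV[R]_m :=
  \col_(i < m) v (lshift 1 (lshift p i)).
Definition zof (m p : nat) (v : 'I_(m + p + 1) -> R) : 'cV[R]_p :=
  \col_(i < p) v (lshift 1 (rshift m i)).
Definition sof (m p : nat) (v : 'I_(m + p + 1) -> R) : R :=
  v (rshift (m + p) (ord0 : 'I_1)).

Definition net (m n k : nat) :=
  'cV[R]_m -> 'cV[R]_(n + k) -> R -> 'M[R]_(n + k) * 'cV[R]_(n + k).

Definition ISDnet (m n k : nat) (Nn : net m n k) : Prop :=
  (forall i j : 'I_(n + k),
      ISD (fun v => (Nn (xof v) (zof v) (sof v)).1 i j)) /\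
  (forall i : 'I_(n + k),
      ISD (fun v => (Nn (xof v) (zof v) (sof v)).2 i ord0)).

Definition clamp (c a : R) : R := Num.min (Num.max a (- c)) c.

Definition clamp_sol (p : nat) (c : R) (M : 'M[R]_p) (b : 'cV[R]_p) : 'cV[R]_p :=
  if M \in unitmx then map_mx (clamp c) (invmx M *m b) else 0.

(* z : [0,1] -> R^(n+k) is an (exact, classical) solution of
   z'(s) = clamp-sol_c(M(x,z(s),s), b(x,z(s),s)), z(0) = 0.
   (z is given on all of R; only its behaviour on [0,1] matters: a solution on
   [0,1] with one-sided derivatives at 0 and 1 extends affinely to such a z.) *)
Definition ode_solution (m n k : nat) (Nn : net m n k) (x : 'cV[R]_m) (c : R)
    (z : R -> 'cV[R]_(n + k)) : Prop :=
  z 0 = 0 /\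
  forall s : R, 0 <= s <= 1 ->
    is_derive s 1 z (clamp_sol c (Nn x (z s) s).1 (Nn x (z s) s).2).

Definition firstn_vec (n k : nat) (w : 'cV[R]_(n + k)) : 'cV[R]_n :=
  \col_(i < n) w (lshift k i) ord0.

Definition SANN_lim_eq (m n k : nat) (Nn : net m n k) (x : 'cV[R]_m) (c : R)
    (y : 'cV[R]_n) : Prop :=
  (exists z, ode_solution Nn x c z) /\
  (forall z, ode_solution Nn x c z -> firstn_vec (z 1) = y).

Inductive semialgebraic (N : nat) : (('I_N -> R) -> Prop) -> Prop :=
| sa_eq (p : mpoly.mpoly N R) : semialgebraic (fun v => polyfun p v = 0)
| sa_pos (p : mpoly.mpoly N R) : semialgebraic (fun v => 0 < polyfun p v)
| sa_union A B : semialgebraic A -> semialgebraic B ->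
    semialgebraic (fun v => A v \/ B v)
| sa_inter A B : semialgebraic A -> semialgebraic B ->
    semialgebraic (fun v => A v /\ B v)
| sa_compl A : semialgebraic A -> semialgebraic (fun v => ~ A v).

Definition semialgebraic_fun (m n : nat) (F : 'cV[R]_m -> 'cV[R]_n) : Prop :=
  semialgebraic (fun v : 'I_(m + n) -> R =>
    F (\col_(i < m) v (lshift n i)) = \col_(j < n) v (rshift m j)).

End Defs.

(* Main.v *)
Require Import Defs.
From HB Require Import structures.
From mathcomp Require Import all_boot all_order all_algebra.
From mathcomp Require Import all_classical all_reals all_analysis.
From mathcomp Require Import ring lra.
From mathcomp Require mpoly.
Import (canonicals, coercions) mpoly.
Import Order.TTheory GRing.Theory Num.Theory.
Import numFieldNormedType.Exports.
Local Open Scope ring_scope.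

Module P1.
Set Implicit Arguments. Unset Strict Implicit.

Section ISDc.
Variable R : realType.
Variable N : nat.
Implicit Types f g : ('I_N -> R) -> R.
Implicit Types p q : mpoly.mpoly N R.

Definition pX (i : 'I_N) : mpoly.mpoly N R := mpoly.mpolyX R (mpoly.mnm1 i).
Lemma pXE v i : polyfun (pX i) v = v i.
Proof. exact: mpoly.mevalXU. Qed.
Lemma pCE v (c : R) : polyfun (mpoly.mpolyC N c) v = c.
Proof. exact: mpoly.mevalC. Qed.
Lemma pDE v p q : polyfun (p + q) v = polyfun p v + polyfun q v.
Proof. exact: mpoly.mevalD. Qed.
Lemma pME v p q : polyfun (p * q) v = polyfun p v * polyfun q v.
Proof. exact: mpoly.mevalM. Qed.
Lemma pNE v p : polyfun (- p) v = - polyfun p v.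
Proof. exact: mpoly.mevalN. Qed.
Lemma pBE v p q : polyfun (p - q) v = polyfun p v - polyfun q v.
Proof. exact: mpoly.mevalB. Qed.
Lemma pXnE v p k : polyfun (p ^+ k) v = polyfun p v ^+ k.
Proof. exact: rmorphXn. Qed.

Lemma ISD_ext f g : (forall v, f v = g v) -> ISD f -> ISD g.
Proof. by move=> e; have -> : g = f by apply: funext => v; rewrite e. Qed.

Lemma ISD_P p g : (forall v, g v = polyfun p v) -> ISD g.
Proof. move=> e; apply: (ISD_ext (f := polyfun p)); last exact: ISD_poly. by move=> v; rewrite e. Qed.

Lemma ISD_min f g : ISD f -> ISD g -> ISD (fun v => Num.min (f v) (g v)).
Proof. exact: ISD_min. Qed.
Lemma ISD_max f g : ISD f -> ISD g -> ISD (fun v => Num.max (f v) (g v)).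
Proof. exact: ISD_max. Qed.

Lemma ISD_opp f : ISD f -> ISD (fun v => - f v).
Proof.
elim=> [p|f1 g1 _ H1 _ H2|f1 g1 _ H1 _ H2].
- by apply: (ISD_P (p := - p)) => v; rewrite pNE.
- apply: ISD_ext (ISD_max H1 H2) => v; by rewrite oppr_min.
- apply: ISD_ext (ISD_min H1 H2) => v; by rewrite oppr_max.
Qed.

Lemma ISD_mulp f p : ISD f -> exists g, ISD g /\
  forall v, 0 <= polyfun p v -> g v = polyfun p v * f v.
Proof.
elim=> [q|f1 g1 _ [h1 [H1 E1]] _ [h2 [H2 E2]]|f1 g1 _ [h1 [H1 E1]] _ [h2 [H2 E2]]].
- exists (polyfun (p * q)); split; first exact: ISD_poly.
  by move=> v _; rewrite pME.
- exists (fun v => Num.min (h1 v) (h2 v)); split; first exact: ISD_min.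
  by move=> v hv; rewrite minr_pMr // E1 // E2.
- exists (fun v => Num.max (h1 v) (h2 v)); split; first exact: ISD_max.
  by move=> v hv; rewrite maxr_pMr // E1 // E2.
Qed.

End ISDc.

End P1.
Import P1.

Module P2.
Set Implicit Arguments. Unset Strict Implicit.

Section Hom.
Variable R : realType.
Variables m n : nat.
Local Notation N := (m + (n + 1) + 1)%N.
Definition ix (j : 'I_m) : 'I_N := lshift 1 (lshift (n + 1) j).
Definition iz (i : 'I_(n + 1)) : 'I_N := lshift 1 (rshift m i).
Definition iS : 'I_N := rshift (m + (n + 1)) ord0.
Definition izz (j : 'I_n) : 'I_N := iz (lshift 1 j).
Definition ic : 'I_N := iz (rshift n ord0).

Definition Tp (v : 'I_N -> R) : 'I_(m + n) -> R := fun i =>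
  match fintype.split i with inl j => v (ix j) | inr j => v (izz j) / v iS ^+ 3 end.

Definition Hm (p : mpoly.mpoly (m + n) R) := exists k (Q : mpoly.mpoly N R),
  forall v, 0 < v iS -> polyfun Q v = v iS ^+ k * polyfun p (Tp v).

Lemma Hm_add p q : Hm p -> Hm q -> Hm (p + q).
Proof.
move=> [k1 [Q1 E1]] [k2 [Q2 E2]].
exists (k1 + k2)%N, (Q1 * pX R iS ^+ k2 + Q2 * pX R iS ^+ k1) => v vp.
rewrite /polyfun !(mpoly.mevalD, mpoly.mevalM, rmorphXn, mpoly.mevalXU) -!/(polyfun _ _) E1 // E2 //.
set t := (X in _ * X ^+ k2); have -> : t = v iS by exact: pXE.
set t' := (X in _ * X ^+ k1); have -> : t' = v iS by exact: pXE.
rewrite exprD; ring.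
Qed.

Lemma Hm_mul p q : Hm p -> Hm q -> Hm (p * q).
Proof.
move=> [k1 [Q1 E1]] [k2 [Q2 E2]].
exists (k1 + k2)%N, (Q1 * Q2) => v vp.
rewrite !pME E1 // E2 // exprD; ring.
Qed.

Lemma Hm_scale c p : Hm p -> Hm (c *: p).
Proof.
move=> [k [Q E]]; exists k, (c *: Q) => v vp.
rewrite /polyfun !mpoly.mevalZ -/(polyfun _ _) E //; ring.
Qed.

Lemma Hm_C c : Hm (mpoly.mpolyC _ c).
Proof. exists 0%N, (mpoly.mpolyC _ c) => v _; by rewrite !pCE expr0 mul1r. Qed.

Lemma Hm_X i : Hm (pX R i).
Proof.
rewrite /Hm /Tp; case: (split_ordP i) => [j ->|j ->].
- exists 0%N, (pX R (ix j)) => v _; by rewrite !pXE expr0 mul1r (unsplitK (inl j)).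
- exists 3%N, (pX R (izz j)) => v vp; rewrite !pXE (unsplitK (inr j)).
  by rewrite mulrC divfK // expf_neq0 // gt_eqF.
Qed.

Lemma Hm_all p : Hm p.
Proof.
elim/mpoly.mpolyind: p => [|c mo p _ _ Hp].
- by have := Hm_C 0; rewrite raddf0.
apply: Hm_add => //; apply: Hm_scale.
rewrite mpoly.mpolyXE_id; apply: (big_ind Hm) => //.
- by have := Hm_C 1; rewrite rmorph1.
- exact: Hm_mul.
move=> i _; elim: (mo i) => [|k IH]; first by have := Hm_C 1; rewrite rmorph1.
by rewrite exprS; apply: Hm_mul => //; apply: Hm_X.
Qed.

End Hom.

End P2.
Import P2.

Module P3.
Set Implicit Arguments. Unset Strict Implicit.

Section MM.
Variable R : realType.
Implicit Types a b x : R.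
Lemma minr0P a b : 0 <= a -> 0 <= b -> Num.min a b = 0 -> a = 0 \/ b = 0.
Proof. by move=> ha hb; case: (lerP a b) => h /= e; [left|right]. Qed.
Lemma maxr0P a b : 0 <= a -> 0 <= b -> Num.max a b = 0 -> a = 0 /\ b = 0.
Proof. move=> ha hb; case: (lerP a b) => h /= e; split; lra. Qed.
Lemma max0P x : Num.max 0 x = 0 -> x <= 0.
Proof. case: (lerP 0 x) => h /= e; lra. Qed.
Lemma max0E x : x <= 0 -> Num.max 0 x = 0.
Proof. move=> h; case: (lerP 0 x) => h' //=; lra. Qed.
Lemma max0_ge0 x : 0 <= Num.max 0 x.
Proof. case: (lerP 0 x) => h //=; lra. Qed.
Lemma max_ge0l a b : 0 <= a -> 0 <= Num.max a b.
Proof. case: (lerP a b) => h //=; lra. Qed.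
Lemma min_ge0 a b : 0 <= a -> 0 <= b -> 0 <= Num.min a b.
Proof. case: (lerP a b) => h //=; lra. Qed.
Lemma min0l a b : a = 0 -> 0 <= b -> Num.min a b = 0.
Proof. move=> ->; case: (lerP 0 b) => h //=; lra. Qed.
Lemma min0r a b : b = 0 -> 0 <= a -> Num.min a b = 0.
Proof. move=> ->; case: (lerP a 0) => h //=; lra. Qed.
Lemma min_le0l a b : a <= 0 -> Num.min a b <= 0.
Proof. case: (lerP a b) => h //=; lra. Qed.
Lemma min_le0r a b : b <= 0 -> Num.min a b <= 0.
Proof. case: (lerP a b) => h //=; lra. Qed.
End MM.

Section RFs.
Variable R : realType.
Variables m n : nat.
Local Notation N := (m + (n + 1) + 1)%N.
Local Notation iS := (@iS m n).
Local Notation Tp := (@Tp R m n).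

Definition RF (P : ('I_(m + n) -> R) -> Prop) :=
  exists f : ('I_N -> R) -> R, ISD f /\ (forall v, 0 <= f v) /\
   (forall v, 0 < v iS -> f v = 0 -> P (Tp v)) /\
   (forall w, P w -> exists2 s0, 0 < s0 &
       forall v, 0 < v iS -> v iS <= s0 -> Tp v = w -> f v = 0).

Lemma RF_ext P P' : (forall w, P w <-> P' w) -> RF P -> RF P'.
Proof.
move=> e [f [I [nn [S C]]]]; exists f; split => //; split => //; split.
- by move=> v h1 h2; apply/e; apply: S.
- by move=> w /e /C.
Qed.

Lemma RF_or A B : RF A -> RF B -> RF (fun w => A w \/ B w).
Proof.
move=> [f [If [nf [Sf Cf]]]] [g [Ig [ng [Sg Cg]]]].
exists (fun v => Num.min (f v) (g v)); split; first exact: ISD_min.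
split; first by move=> v; apply: min_ge0.
split.
- move=> v hv /minr0P [] // h; [left; exact: Sf | right; exact: Sg].
- move=> w [/Cf [s0 s0p H]|/Cg [s0 s0p H]]; exists s0 => // v h1 h2 h3.
  + by apply: min0l => //; apply: H.
  + by apply: min0r => //; apply: H.
Qed.

Lemma RF_and A B : RF A -> RF B -> RF (fun w => A w /\ B w).
Proof.
move=> [f [If [nf [Sf Cf]]]] [g [Ig [ng [Sg Cg]]]].
exists (fun v => Num.max (f v) (g v)); split; first exact: ISD_max.
split; first by move=> v; apply: max_ge0l.
split.
- by move=> v hv /maxr0P [] // h1 h2; split; [apply: Sf|apply: Sg].
- move=> w [/Cf [s1 s1p H1] /Cg [s2 s2p H2]]; exists (Num.min s1 s2).
    by rewrite lt_min s1p s2p.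
  move=> v h1; rewrite le_min => /andP [h2 h3] h4.
  by rewrite H1 // H2 // /Num.max ltxx.
Qed.

Lemma RF_atoms (p : mpoly.mpoly (m + n) R) :
  RF (fun w => polyfun p w = 0) /\ RF (fun w => ~ polyfun p w = 0) /\
  RF (fun w => 0 < polyfun p w) /\ RF (fun w => ~ 0 < polyfun p w).
Proof.
have [k [Q EQ]] := Hm_all p.
set S := pX R iS.
have SE v : polyfun (S ^+ k.+1) v = v iS ^+ k.+1 by rewrite pXnE pXE.
have Ipoly (q : mpoly.mpoly N R) : ISD (polyfun q) by apply: ISD_poly.
have tpos (v : 'I_N -> R) : 0 < v iS -> 0 < v iS ^+ k by move=> h; apply: exprn_gt0.
have SE' v : polyfun (S ^+ k.+1) v = v iS ^+ k * v iS by rewrite SE exprSr.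
split; [|split; [|split]].
- exists (fun v => Num.max (polyfun Q v) (polyfun (- Q) v)); split.
    by apply: ISD_max.
  split; first by move=> v; rewrite pNE; case: (lerP (polyfun Q v) (- polyfun Q v)) => /= h; lra.
  split.
  + move=> v hv; rewrite pNE EQ // => e.
    have t0 := tpos v hv.
    have : v iS ^+ k * polyfun p (Tp v) = 0.
      move: e; case: (lerP (v iS ^+ k * polyfun p (Tp v)) (- (v iS ^+ k * polyfun p (Tp v)))) => /= h; lra.
    by move/eqP; rewrite mulf_eq0 gt_eqF //= => /eqP.
  + move=> w hw; exists 1 => // v h1 h2 h3.
    by rewrite pNE EQ // h3 hw mulr0 oppr0 /Num.max ltxx.
- exists (fun v => Num.max 0 (Num.min (polyfun (S ^+ k.+1 - Q) v) (polyfun (S ^+ k.+1 + Q) v))).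
  split.
    by apply: ISD_max; [apply: (ISD_P (p := mpoly.mpolyC N 0)) => v; rewrite pCE|apply: ISD_min].
  split; first by move=> v; apply: max0_ge0.
  split.
  + move=> v hv e hp; move: e; rewrite pBE pDE SE' EQ // hp mulr0 subr0 addr0.
    have := tpos v hv; rewrite minxx => t0 /max0P h; have := mulr_gt0 t0 hv; lra.
  + move=> w hw; exists `|polyfun p w|; first by rewrite normr_gt0; apply/eqP.
    move=> v h1 h2 h3; apply: max0E; rewrite pBE pDE SE' EQ // h3.
    have t0 := tpos v h1.
    have hh : v iS ^+ k * v iS <= v iS ^+ k * `|polyfun p w| by rewrite ler_pM2l.
    move: hh; case: (lerP 0 (polyfun p w)) => hs; [rewrite ger0_norm // | rewrite ltr0_norm //] => hh.
    * by apply: min_le0l; lra.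
    * by rewrite mulrN in hh; apply: min_le0r; lra.
- exists (fun v => Num.max 0 (polyfun (S ^+ k.+1 - Q) v)).
  split.
    by apply: ISD_max; [apply: (ISD_P (p := mpoly.mpolyC N 0)) => v; rewrite pCE|].
  split; first by move=> v; apply: max0_ge0.
  split.
  + move=> v hv /max0P; rewrite pBE SE' EQ // => h.
    have t0 := tpos v hv; nra.
  + move=> w hw; exists (polyfun p w) => // v h1 h2 h3; apply: max0E.
    rewrite pBE SE' EQ // h3; have t0 := tpos v h1; nra.
- exists (fun v => Num.max 0 (polyfun Q v)).
  split.
    by apply: ISD_max; [apply: (ISD_P (p := mpoly.mpolyC N 0)) => v; rewrite pCE|].
  split; first by move=> v; apply: max0_ge0.
  split.
  + move=> v hv /max0P; rewrite EQ // => h.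
    have t0 := tpos v hv => hp; have := mulr_gt0 t0 hp; lra.
  + move=> w hw; exists 1 => // v h1 h2 h3; apply: max0E.
    rewrite EQ // h3; have t0 := tpos v h1.
    have hw' : polyfun p w <= 0 by rewrite leNgt; apply/negP.
    by rewrite pmulr_rle0.
Qed.

Lemma RF_sa (A : ('I_(m + n) -> R) -> Prop) :
  semialgebraic A -> RF A /\ RF (fun w => ~ A w).
Proof.
elim=> [p|p|A1 B1 _ [H1 H1'] _ [H2 H2']|A1 B1 _ [H1 H1'] _ [H2 H2']|A1 _ [H1 H1']].
- by have [? [? _]] := RF_atoms p.
- by have [_ [_ ?]] := RF_atoms p.
- split; first exact: RF_or.
  apply: RF_ext (RF_and H1' H2') => w; tauto.
- split; first exact: RF_and.
  apply: RF_ext (RF_or H1' H2') => w; split; first tauto.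
  by move=> h; case: (boolp.pselect (A1 w)) => a; [right => b; apply: h|left].
- split => //; apply: RF_ext H1 => w; split; first tauto.
  by move=> h; case: (boolp.pselect (A1 w)) => // a.
Qed.

End RFs.

End P3.
Import P3.

Module P5.
Set Implicit Arguments. Unset Strict Implicit.

Section Der.
Variable R : realType.

Lemma mx_der_comp p q (M : R -> 'M[R]_(p, q)) (t : R) (D : 'M[R]_(p, q)) :
  is_derive t (1 : R) M D -> forall i j, is_derive t (1 : R) (fun s => M s i j) (D i j).
Proof.
move=> hd i j; have dM : derivable M t (1 : R) by case: hd.
have /derivable_mxP dij := dM.
apply: DeriveDef; first exact: dij.
have <- : 'D_1 M t = D by apply: derive_val.
by rewrite derive_mx // mxE.
Qed.

Lemma mx_der_of p q (M : R -> 'M[R]_(p, q)) (t : R) (D : 'M[R]_(p, q)) :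
  (forall i j, is_derive t (1 : R) (fun s => M s i j) (D i j)) -> is_derive t (1 : R) M D.
Proof.
move=> h; have dM : derivable M t (1 : R).
  by apply/derivable_mxP => i j; case: (h i j).
apply: DeriveDef => //; rewrite derive_mx //; apply/matrixP => i j.
by rewrite mxE derive_val.
Qed.

Lemma der_monom (a : R) k t :
  is_derive t (1 : R) (fun s => a * s ^+ k) (a * (k%:R * t ^+ k.-1)).
Proof.
have h := is_deriveZ a (is_deriveX k (is_derive_id t (1 : R))).
have -> : (fun s => a * s ^+ k) = a \*: (@id R ^+ k).
  by apply: funext => s /=; rewrite exprfctE.
by apply: is_derive_eq h _; rewrite /GRing.scale /= mulr1.
Qed.

Lemma der_inv3 (t : R) : t != 0 ->
  is_derive t (1 : R) (fun s => (s ^+ 3)^-1) (- 3 / t ^+ 4).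
Proof.
move=> t0; have h := der_monom 1 3 t.
have e : (fun s : R => 1 * s ^+ 3) = (fun s => s ^+ 3) by apply: funext => s; rewrite mul1r.
rewrite e in h. have d3 : derivable (fun s : R => s ^+ 3) t 1 by case: h.
have t30 : t ^+ 3 != 0 by rewrite expf_neq0.
have dV := @derivableV R R (fun s : R => s ^+ 3) t 1 t30 d3.
apply: (DeriveDef dV).
rewrite (@deriveV R R (fun s : R => s ^+ 3) t 1 t30 d3).
have -> : 'D_1 (fun s : R => s ^+ 3) t = 1 * (3 * t ^+ 3.-1) by apply: derive_val.
rewrite /GRing.scale /=.
by field.
Qed.
Lemma der_div3 (g : R -> R) (t dg : R) : t != 0 -> is_derive t (1 : R) g dg ->
  is_derive t (1 : R) (fun s => g s / s ^+ 3) (dg / t ^+ 3 - 3 * g t / t ^+ 4).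
Proof.
move=> t0 hg.
have h := @is_deriveM R R g (fun s : R => (s ^+ 3)^-1) t 1 dg (- 3 / t ^+ 4) hg (der_inv3 t0).
have -> : (fun s => g s / s ^+ 3) = (g * (fun s : R => (s ^+ 3)^-1))%R.
  by apply: funext.
apply: (is_derive_eq h).
rewrite /GRing.scale /=.
by field.
Qed.

Local Open Scope classical_set_scope.
Lemma const_seg (f df : R -> R) (a b : R) : a <= b ->
  (forall t, a <= t <= b -> is_derive t (1 : R) f (df t)) ->
  (forall t, a < t < b -> df t = 0) -> f b = f a.
Proof.
move=> ab hd h0; have [e|lt] := eqVneq a b; first by rewrite e.
have altb : a < b by rewrite lt_neqAle lt ab.
have cf : {within `[a, b], continuous f}.
  apply: derivable_within_continuous => t; rewrite in_itv /= => ht.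
  by have [] := hd t ht.
have [c /[!in_itv] /= /andP [c1 c2] e] := MVT altb (df := df) (fun t ht => hd t (ltac:(move: ht; rewrite in_itv /= => /andP [h1 h2]; rewrite ltW // ltW //))) cf.
by apply/eqP; rewrite -subr_eq0 e h0 ?mul0r // c1 c2.
Qed.

End Der.

End P5.
Import P5.

Module P4.
Set Implicit Arguments. Unset Strict Implicit.

Section Net.
Variable R : realType.
Variables m n : nat.
Local Notation N := (m + (n + 1) + 1)%N.
Local Notation iS := (@iS m n).
Local Notation ic := (@ic m n).
Local Notation izz := (@izz m n).
Local Notation ix := (@ix m n).
Local Notation iz := (@iz m n).
Local Notation Tp := (@Tp R m n).
Variable uF : R.
Hypothesis uFp : 0 < uF.
Variable f1 : ('I_N -> R) -> R.
Hypothesis If1 : ISD f1.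
Hypothesis nf1 : forall v, 0 <= f1 v.

Definition cmax : R := 3 * uF + 2.

Definition ISDpoly (g : ('I_N -> R) -> R) := exists p, forall v, g v = polyfun p v.
Lemma ISDpolyI g : ISDpoly g -> ISD g.
Proof. by move=> [p e]; apply: ISD_P e. Qed.
Lemma ISDpX i : ISDpoly (fun v => v i).
Proof. by exists (pX R i) => v; rewrite pXE. Qed.
Lemma ISDpC (c : R) : ISDpoly (fun v => c).
Proof. by exists (mpoly.mpolyC N c) => v; rewrite pCE. Qed.
Lemma ISDpD g h : ISDpoly g -> ISDpoly h -> ISDpoly (fun v => g v + h v).
Proof. by move=> [p e] [q e']; exists (p + q) => v; rewrite pDE e e'. Qed.
Lemma ISDpM g h : ISDpoly g -> ISDpoly h -> ISDpoly (fun v => g v * h v).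
Proof. by move=> [p e] [q e']; exists (p * q) => v; rewrite pME e e'. Qed.
Lemma ISDpXn g k : ISDpoly g -> ISDpoly (fun v => g v ^+ k).
Proof. by move=> [p e]; exists (p ^+ k) => v; rewrite pXnE e. Qed.
Lemma ISDpN g : ISDpoly g -> ISDpoly (fun v => - g v).
Proof. by move=> [p e]; exists (- p) => v; rewrite pNE e. Qed.
Lemma ISDpB g h : ISDpoly g -> ISDpoly h -> ISDpoly (fun v => g v - h v).
Proof. by move=> hg hh; apply: ISDpD => //; apply: ISDpN. Qed.

Definition f2 (v : 'I_N -> R) : R := Num.max 0
  (\big[Num.min/cmax * v iS]_(j < n)
     Num.min (cmax * v iS - 3 * v (izz j)) (cmax * v iS + 3 * v (izz j))).

Lemma ISD_bigmin (I : eqType) (s : seq I) (b : ('I_N -> R) -> R)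
   (G : I -> ('I_N -> R) -> R) : ISD b -> (forall j, ISD (G j)) ->
  ISD (fun v => \big[Num.min/b v]_(j <- s) G j v).
Proof.
move=> Ib IG; elim: s => [|j s IH].
  by apply: ISD_ext Ib => v; rewrite big_nil.
by apply: ISD_ext (ISD_min (IG j) IH) => v; rewrite big_cons.
Qed.

Lemma ISD_f2 : ISD f2.
Proof.
apply: ISD_max; first exact/ISDpolyI/ISDpC.
apply: ISD_bigmin; first by apply/ISDpolyI/ISDpM; [apply: ISDpC|apply: ISDpX].
move=> j; apply: ISD_min; apply/ISDpolyI.
- by apply: ISDpB; apply: ISDpM; [apply: ISDpC|apply: ISDpX|apply: ISDpC|apply: ISDpX].
- by apply: ISDpD; apply: ISDpM; [apply: ISDpC|apply: ISDpX|apply: ISDpC|apply: ISDpX].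
Qed.

Definition absr (a : R) := Num.max a (- a).
Lemma absrE a : absr a = `|a|.
Proof. rewrite /absr; case: (lerP 0 a) => h; [rewrite ger0_norm // | rewrite ltr0_norm //]; case: (lerP a (-a)) => /= h'; lra. Qed.

Definition qf (v : 'I_N -> R) : R :=
  Num.max (absr (v ic - v iS ^+ 2)) (Num.min (f1 v) (f2 v)).

Lemma ISD_qf : ISD qf.
Proof.
apply: ISD_max; last by apply: ISD_min => //; apply: ISD_f2.
apply: ISD_max; apply/ISDpolyI; last apply: ISDpN;
  (apply: ISDpB; [apply: ISDpX| apply: ISDpXn; apply: ISDpX]).
Qed.

Variable sqf : ('I_N -> R) -> R.
Hypothesis Isqf : ISD sqf.
Hypothesis sqfE : forall v, 0 <= v iS -> sqf v = 2 * v iS * qf v.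

Definition enc (x : 'cV[R]_m) (z : 'cV[R]_(n + 1)) (s : R) : 'I_N -> R :=
  fun i => match fintype.split i with
           | inl i1 => match fintype.split i1 with inl j => x j ord0 | inr j => z j ord0 end
           | inr _ => s end.

Lemma enc_ix x z s j : enc x z s (ix j) = x j ord0.
Proof. by rewrite /enc /P2.ix (unsplitK (inl _ : 'I__ + 'I_1)) (unsplitK (inl _ : 'I_m + 'I__)). Qed.
Lemma enc_iz x z s (i : 'I_(n + 1)) : enc x z s (iz i) = z i ord0.
Proof. by rewrite /enc /P2.iz (unsplitK (inl _ : 'I__ + 'I_1)) (unsplitK (inr _ : 'I_m + 'I__)). Qed.
Lemma enc_iS x z s : enc x z s iS = s.
Proof. by rewrite /enc /P2.iS (unsplitK (inr _ : 'I__ + 'I_1)). Qed.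

Lemma enc_dec v : enc (xof v) (zof v) (sof v) = v.
Proof.
apply: funext => i; rewrite /enc.
case: (split_ordP i) => [i1 ->|k ->].
- case: (split_ordP i1) => [j ->|j ->]; by rewrite mxE.
- by rewrite /sof (ord1 k).
Qed.

Definition dvec (v : 'I_N -> R) : 'rV[R]_(n + 1) :=
  row_mx (\row_(j < n) v iS) (\row_(j < 1) qf v).
Definition Mfun (v : 'I_N -> R) : 'M[R]_(n + 1) := diag_mx (dvec v).
Definition bfun (v : 'I_N -> R) : 'cV[R]_(n + 1) :=
  col_mx (\col_(j < n) (3 * v (izz j))) (\col_(j < 1) sqf v).

Definition Nnet : net R m n 1 := fun x z s => (Mfun (enc x z s), bfun (enc x z s)).

Lemma Nnet_ISD : ISDnet Nnet.
Proof.
split.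
- move=> i j; apply: (ISD_ext (f := fun v => Mfun v i j)).
    by move=> v; rewrite /Nnet /= enc_dec.
  rewrite /Mfun; apply: (ISD_ext (f := fun v => dvec v 0 i *+ (i == j))).
    by move=> v; rewrite [in RHS]mxE.
  case: (i == j).
  + rewrite /dvec; case: (split_ordP i) => [k ->|k ->].
    * by apply: ISD_ext (ISDpolyI (ISDpX iS)) => v; rewrite row_mxEl mxE.
    * by apply: ISD_ext ISD_qf => v; rewrite row_mxEr mxE.
  + by apply: ISD_ext (ISDpolyI (ISDpC 0)) => v.
- move=> i; apply: (ISD_ext (f := fun v => bfun v i ord0)).
    by move=> v; rewrite /Nnet /= enc_dec.
  rewrite /bfun; case: (split_ordP i) => [k ->|k ->].
  + apply: ISD_ext (ISDpolyI (ISDpM (ISDpC 3) (ISDpX (izz k)))) => v.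
    by rewrite col_mxEu mxE.
  + by apply: ISD_ext Isqf => v; rewrite col_mxEd mxE.
Qed.

Lemma cmax_gt0 : 0 < cmax.
Proof. rewrite /cmax; have := uFp; lra. Qed.

Lemma clamp_id a : - cmax <= a <= cmax -> clamp cmax a = a.
Proof.
move=> /andP [h1 h2]; rewrite /clamp max_l // min_l //.
Qed.

Definition Vf x w s := clamp_sol cmax (Mfun (enc x w s)) (bfun (enc x w s)).

Lemma V_Z x w s : qf (enc x w s) = 0 -> Vf x w s = 0.
Proof.
move=> hq; rewrite /Vf /clamp_sol.
have -> : (Mfun (enc x w s) \in unitmx) = false.
  rewrite unitmxE unitfE /Mfun det_diag (bigD1 (rshift n ord0)) //=.
  by rewrite /dvec row_mxEr mxE hq mul0r eqxx.
by [].
Qed.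

Definition w0 (w : 'cV[R]_(n + 1)) (s : R) : 'cV[R]_(n + 1) :=
  col_mx (\col_(j < n) (3 * w (lshift 1 j) ord0 / s)) (\col_(j < 1) (2 * s)).

Lemma V_nZ x w s : 0 < s -> qf (enc x w s) != 0 ->
  Vf x w s = map_mx (clamp cmax) (w0 w s).
Proof.
move=> sp hq; rewrite /Vf /clamp_sol.
have hu : Mfun (enc x w s) \in unitmx.
  rewrite unitmxE unitfE /Mfun det_diag prodf_seq_neq0; apply/allP => i _.
  rewrite /dvec; case: (split_ordP i) => [k ->|k ->].
  - by rewrite row_mxEl mxE enc_iS gt_eqF.
  - by rewrite row_mxEr mxE.
rewrite hu; congr map_mx.
have <- : Mfun (enc x w s) *m w0 w s = bfun (enc x w s).
  rewrite /Mfun mul_diag_mx; apply/matrixP => i j; rewrite [LHS]mxE (ord1 j).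
  rewrite /dvec /w0 /bfun; case: (split_ordP i) => [k ->|k ->].
  - rewrite !mxE (unsplitK (inl k : 'I_n + 'I_1)) !mxE enc_iS /izz enc_iz.
    by field; rewrite gt_eqF.
  - rewrite !mxE (unsplitK (inr k : 'I_n + 'I_1)) !mxE sqfE enc_iS; first ring.
    by apply: ltW.
by rewrite mulKmx.
Qed.

Lemma V_00 x : Vf x 0 0 = 0.
Proof.
rewrite /Vf /clamp_sol.
have -> : bfun (enc x 0 0) = 0.
  apply/matrixP => i j; rewrite /bfun (ord1 j) [in RHS]mxE.
  case: (split_ordP i) => [k ->|k ->].
  - by rewrite col_mxEu mxE /izz enc_iz mxE mulr0.
  - by rewrite col_mxEd mxE sqfE enc_iS ?lexx // mulr0 mul0r.
case: ifP => // _; rewrite mulmx0; apply/matrixP => i j; rewrite !mxE.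
by rewrite clamp_id ?oppr0 //; have := cmax_gt0; rewrite oppr_le0 => h; rewrite ltW ?h.
Qed.

Variable F : 'cV[R]_m -> 'cV[R]_n.
Hypothesis Fb : forall (x : 'cV[R]_m) (i : 'I_n), - uF < F x i ord0 < uF.
Definition Pg (w : 'I_(m + n) -> R) : Prop :=
  F (\col_(i < m) w (lshift n i)) = \col_(j < n) w (rshift m j).
Hypothesis Sf1 : forall v, 0 < v iS -> f1 v = 0 -> ~ Pg (Tp v).
Hypothesis Cf1 : forall w, ~ Pg w -> exists2 s0, 0 < s0 &
       forall v, 0 < v iS -> v iS <= s0 -> Tp v = w -> f1 v = 0.

Lemma Tp_enc (x : 'cV[R]_m) (w : 'cV[R]_(n + 1)) (s : R) i : Tp (enc x w s) i =
  match fintype.split i with inl j => x j ord0 | inr j => w (lshift 1 j) ord0 / s ^+ 3 end.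
Proof.
rewrite /P2.Tp; case: (fintype.split i) => j; first by rewrite enc_ix.
by rewrite /izz enc_iz enc_iS.
Qed.

Lemma Pg_enc (x : 'cV[R]_m) (w : 'cV[R]_(n + 1)) (s : R) : s != 0 ->
  (forall j, w (lshift 1 j) ord0 = s ^+ 3 * F x j ord0) -> Pg (Tp (enc x w s)).
Proof.
move=> s0 hw; rewrite /Pg.
have -> : \col_(i < m) Tp (enc x w s) (lshift n i) = x.
  by apply/matrixP => i j; rewrite (ord1 j) mxE Tp_enc (unsplitK (inl i : 'I_m + 'I_n)).
apply/matrixP => i j; rewrite (ord1 j) mxE Tp_enc (unsplitK (inr i : 'I_m + 'I_n)) hw.
by rewrite [s ^+ 3 * _]mulrC mulfK // expf_neq0.
Qed.

Lemma f2_pos v : 0 < v iS ->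
  (forall j, 3 * `|v (izz j)| < cmax * v iS) -> 0 < f2 v.
Proof.
move=> sp hj; rewrite /f2.
suff h : 0 < \big[Num.min/cmax * v iS]_(j < n)
     Num.min (cmax * v iS - 3 * v (izz j)) (cmax * v iS + 3 * v (izz j)).
  by apply: lt_le_trans h _; rewrite le_max lexx orbT.
apply: (big_ind (fun y => 0 < y)).
- by apply: mulr_gt0 => //; apply: cmax_gt0.
- by move=> a b ha hb; rewrite lt_min ha hb.
move=> j _; have := hj j; rewrite lt_min.
case: (lerP 0 (v (izz j))) => h; [rewrite ger0_norm // | rewrite ltr0_norm //] => h'.
  by apply/andP; split; lra.
by apply/andP; split; lra.
Qed.

Lemma f2_pos_inv v : 0 < f2 v -> forall j, 3 * `|v (izz j)| < cmax * v iS.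
Proof.
rewrite /f2 lt_max ltxx /= => h j.
have : \big[Num.min/cmax * v iS]_(j < n)
     Num.min (cmax * v iS - 3 * v (izz j)) (cmax * v iS + 3 * v (izz j)) <=
     Num.min (cmax * v iS - 3 * v (izz j)) (cmax * v iS + 3 * v (izz j)).
  rewrite (bigD1 j) //=; rewrite ge_min lexx //.
move=> /(lt_le_trans h); rewrite lt_min => /andP [h1 h2].
case: (lerP 0 (v (izz j))) => h'; [rewrite ger0_norm // | rewrite ltr0_norm //]; lra.
Qed.

Definition zt (x : 'cV[R]_m) (s : R) : 'cV[R]_(n + 1) :=
  col_mx (s ^+ 3 *: F x) (\col_(j < 1) (s ^+ 2)).
Definition Dz (x : 'cV[R]_m) (s : R) : 'cV[R]_(n + 1) :=
  col_mx ((3 * s ^+ 2) *: F x) (\col_(j < 1) (2 * s)).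

Lemma zt_der x s : is_derive s (1 : R) (zt x) (Dz x s).
Proof.
apply: mx_der_of => i j; rewrite (ord1 j).
case: (split_ordP i) => [k ->|k ->].
- have -> : (fun t => zt x t (lshift 1 k) ord0) = (fun t => F x k ord0 * t ^+ 3).
    by apply: funext => t; rewrite /zt col_mxEu mxE mulrC.
  apply: (is_derive_eq (der_monom (F x k ord0) 3 s)).
  by rewrite /Dz col_mxEu mxE mulrC.
- have -> : (fun t => zt x t (rshift n k) ord0) = (fun t => 1 * t ^+ 2).
    by apply: funext => t; rewrite /zt col_mxEd mxE mul1r.
  apply: (is_derive_eq (der_monom 1 2 s)).
  by rewrite /Dz col_mxEd mxE mul1r expr1.
Qed.

Lemma zt0 x : zt x 0 = 0.
Proof.
apply/matrixP => i j; rewrite /zt [RHS]mxE.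
case: (split_ordP i) => [k ->|k ->].
- by rewrite col_mxEu mxE expr0n mul0r.
- by rewrite col_mxEd mxE expr0n.
Qed.

Lemma Dz0 x : Dz x 0 = 0.
Proof.
apply/matrixP => i j; rewrite /Dz [RHS]mxE.
case: (split_ordP i) => [k ->|k ->].
- by rewrite col_mxEu mxE expr0n mulr0 mul0r.
- by rewrite col_mxEd mxE mulr0.
Qed.

Lemma qf_zt x s : 0 < s -> s <= 1 -> qf (enc x (zt x s) s) != 0.
Proof.
move=> sp s1; set v := enc x (zt x s) s.
have vS : v iS = s by rewrite /v enc_iS.
have hc : v ic = s ^+ 2 by rewrite /v /P2.ic enc_iz /zt col_mxEd mxE.
have hz j : v (izz j) = s ^+ 3 * F x j ord0 by rewrite /v /izz enc_iz /zt col_mxEu mxE.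
have f1p : 0 < f1 v.
  rewrite lt_neqAle nf1 andbT eq_sym; apply/eqP => e.
  apply: (Sf1 _ e); first by rewrite vS.
  apply: Pg_enc; first by rewrite gt_eqF.
  by move=> j; rewrite /zt col_mxEu mxE.
have f2p : 0 < f2 v.
  apply: f2_pos; first by rewrite vS.
  move=> j; rewrite hz vS normrM.
  have hs2 : s ^+ 2 <= 1 by rewrite -(expr1n _ 2) ler_pXn2r // ?nnegrE ltW.
  have hs3 : s ^+ 3 <= s by rewrite -[leRHS]mulr1 exprS ler_pM2l.
  have := Fb x j; rewrite -ltr_norml => hF.
  have hn : 0 <= `|F x j ord0| by [].
  rewrite ger0_norm ?exprn_ge0 ?ltW // /cmax.
  have := uFp; nra.
rewrite /qf hc vS subrr /absr oppr0.
have hm : 0 < Num.min (f1 v) (f2 v) by rewrite lt_min f1p f2p.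
rewrite gt_eqF //; apply: lt_le_trans hm _.
by rewrite le_max lexx orbT.
Qed.

Lemma exist_sol x : ode_solution Nnet x cmax (zt x).
Proof.
split; first exact: zt0.
move=> s /andP [s0 s1].
apply: (is_derive_eq (zt_der x s)); rewrite /Nnet /=.
have [->|sp] := eqVneq s 0.
  by rewrite Dz0 zt0 -/(Vf _ _ _) V_00.
have sp' : 0 < s by rewrite lt_neqAle eq_sym sp s0.
rewrite -/(Vf _ _ _) V_nZ // ?qf_zt //.
apply/matrixP => i j; rewrite (ord1 j) /w0 /Dz [RHS]mxE.
case: (split_ordP i) => [k ->|k ->].
- rewrite !mxE (unsplitK (inl k : 'I_n + 'I_1)) !mxE /zt.
  rewrite (unsplitK (inl k : 'I_n + 'I_1)) mxE.
  have -> : 3 * (s ^+ 3 * F x k ord0) / s = 3 * s ^+ 2 * F x k ord0.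
    by field; rewrite gt_eqF.
  rewrite clamp_id //.
  have := Fb x k => /andP [h1 h2].
  have hs2 : s ^+ 2 <= 1 by rewrite -(expr1n _ 2) ler_pXn2r // ?nnegrE ltW.
  have hs0 : 0 <= s ^+ 2 by apply: exprn_ge0.
  have := uFp; rewrite /cmax => hu; apply/andP; split; nra.
- rewrite !mxE (unsplitK (inr k : 'I_n + 'I_1)) !mxE; rewrite clamp_id // /cmax.
  have := uFp => hu; apply/andP; split; lra.
Qed.

Lemma Vc_nZ x w s : 0 < s -> s <= 1 -> qf (enc x w s) != 0 ->
  Vf x w s (rshift n ord0) ord0 = 2 * s.
Proof.
move=> sp s1 hq; rewrite V_nZ // mxE /w0 !mxE (unsplitK (inr ord0 : 'I_n + 'I_1)) mxE.
rewrite clamp_id // /cmax; have := uFp => hu; apply/andP; split; lra.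
Qed.

Lemma Vz_nZ x w s j : 0 < s -> qf (enc x w s) != 0 ->
  3 * `|w (lshift 1 j) ord0| < cmax * s ->
  Vf x w s (lshift 1 j) ord0 = 3 * w (lshift 1 j) ord0 / s.
Proof.
move=> sp hq hb; rewrite V_nZ // mxE /w0 !mxE (unsplitK (inl j : 'I_n + 'I_1)) mxE.
rewrite clamp_id //.
have hs : 0 < s^-1 by rewrite invr_gt0.
have e : `|3 * w (lshift 1 j) ord0 / s| = 3 * `|w (lshift 1 j) ord0| / s.
  by rewrite !normrM normfV (gtr0_norm sp) (@ger0_norm _ 3).

have : `|3 * w (lshift 1 j) ord0 / s| <= cmax.
  by rewrite e ler_pdivrMr // ltW.
by rewrite -ler_norml.
Qed.

Lemma uniq_sol x z : ode_solution Nnet x cmax z -> firstn_vec (z 1) = F x.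
Proof.
move=> [z0 hd].
pose V s := Vf x (z s) s.
have hdV (s : R) : 0 <= s <= 1 -> is_derive s (1 : R) z (V s) by move=> h; apply: hd.
pose c (t : R) := z t (rshift n ord0) ord0.
pose u (t : R) := c t - 1 * t ^+ 2.
pose du (s : R) := V s (rshift n ord0) ord0 - 1 * (2%:R * s ^+ 1).
have hdu (s : R) : 0 <= s <= 1 -> is_derive s (1 : R) u (du s).
  move=> h; have h1 := mx_der_comp (hdV s h) (rshift n ord0) ord0.
  exact: (@is_deriveB R R R c (fun t => 1 * t ^+ 2) s 1 _ _ h1 (der_monom 1 2 s)).
have u0 : u 0 = 0 by rewrite /u /c z0 mxE expr0n mulr0 subrr.
have V0 : V 0 = 0 by rewrite /V z0 V_00.
have vS (s : R) : enc x (z s) s iS = s by rewrite enc_iS.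
have vc (s : R) : enc x (z s) s ic = c s by rewrite /P2.ic enc_iz.
have dule (s : R) : 0 <= s <= 1 -> du s <= 0.
  move=> /andP [h0 h1]; rewrite /du expr1 mul1r.
  have [->|sp] := eqVneq s 0; first by rewrite V0 mxE mulr0 subrr.
  have sp' : 0 < s by rewrite lt_neqAle eq_sym sp h0.
  have [hq|hq] := eqVneq (qf (enc x (z s) s)) 0.
    by rewrite /V V_Z // mxE sub0r oppr_le0 mulr_ge0.
  by rewrite /V Vc_nZ // subrr.
have cu : {within `[0, 1], continuous u}%classic.
  apply: derivable_within_continuous => t; rewrite in_itv /= => ht.
  by have [] := hdu t ht.
have ule (t : R) : 0 <= t <= 1 -> u t <= 0.
  move=> /andP [h0 h1]; rewrite -u0.
  apply: (ler0_derive1_le_cc (a := 0) (b := 1)) => //.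
  - by move=> s; rewrite in_itv /= => /andP [a b]; have [] := hdu s (ltac:(rewrite !ltW //)).
  - move=> s; rewrite in_itv /= => /andP [a b].
    have [_ e] := hdu s (ltac:(rewrite !ltW //)); rewrite derive1E e.
    by apply: dule; rewrite !ltW.
  - by rewrite in_itv /= h0 h1.
  - by rewrite in_itv /= lexx ler01.
have nZ (s : R) : 0 < s < 1 -> qf (enc x (z s) s) != 0.
  move=> /andP [s0 s1]; apply/eqP => hq.
  have hus : u s = 0.
    move: hq; rewrite /qf => /maxr0P [].
    - by rewrite absrE.
    - by apply: min_ge0 => //; apply: max0_ge0.
    by rewrite absrE vc vS => /normr0_eq0 /eqP; rewrite subr_eq0 => /eqP e; rewrite /u e mul1r subrr.
  have hmax : is_derive s (1 : R) u 0.
    apply: (derive1_at_max (a := 0) (b := 1)) => //.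
    - by move=> t; rewrite in_itv /= => /andP [a b]; have [] := hdu t (ltac:(rewrite !ltW //)).
    - by rewrite in_itv /= s0 s1.
    - by move=> t; rewrite in_itv /= => /andP [a b]; rewrite hus; apply: ule; rewrite !ltW.
  have h2 := hdu s (ltac:(rewrite !ltW //)).
  have : du s = 0.
    by case: h2 => _ <-; case: hmax => _ ->.
  rewrite /du /V V_Z // mxE sub0r expr1 mul1r => /eqP.
  by rewrite oppr_eq0 mulf_eq0 pnatr_eq0 /= => /eqP e; rewrite e ltxx in s0.
have hu1 (t : R) : 0 <= t < 1 -> u t = 0.
  move=> /andP [t0 t1]; rewrite -u0.
  apply: (const_seg (df := du)) => //.
  - by move=> s /andP [a b]; apply: hdu; rewrite a /=; apply: le_trans b _; apply: ltW.
  - move=> s /andP [a b]; have hs : 0 < s < 1 by rewrite a (lt_trans b).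
    have s1 : s <= 1 by apply: ltW; case/andP: hs.
    by rewrite /du /V Vc_nZ ?nZ // expr1 mul1r subrr.
have hE (s : R) : 0 < s < 1 ->
    f1 (enc x (z s) s) != 0 /\ 0 < f2 (enc x (z s) s).
  move=> hs; have := nZ s hs.
  have hc : absr (enc x (z s) s ic - enc x (z s) s iS ^+ 2) = 0.
    have := hu1 s (ltac:(case/andP: hs => a b; rewrite ltW // b)).
    by rewrite vc vS /u mul1r => ->; rewrite /absr oppr0 /Num.max ltxx.
  rewrite /qf hc; split.
  - apply/eqP => e; move: H; rewrite e min0l //; last exact: max0_ge0.
    by rewrite /Num.max ltxx eqxx.
  - have f2n := max0_ge0 (\big[Num.min/cmax * enc x (z s) s iS]_(j < n)
       Num.min (cmax * enc x (z s) s iS - 3 * enc x (z s) s (izz j))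
         (cmax * enc x (z s) s iS + 3 * enc x (z s) s (izz j))).
    rewrite lt_neqAle -/(f2 _) f2n andbT eq_sym; apply/eqP => e; move: H.
    by rewrite e min0r // /Num.max ltxx eqxx.
pose zj (j : 'I_n) (t : R) := z t (lshift 1 j) ord0.
have hdz j (s : R) : 0 < s < 1 -> is_derive s (1 : R) (zj j) (3 * zj j s / s).
  move=> hs; have [s0 s1] := andP hs.
  have h1 := mx_der_comp (hdV s (ltac:(rewrite ltW // ltW //))) (lshift 1 j) ord0.
  rewrite /V Vz_nZ ?nZ // in h1.
  have [_ f2p] := hE s hs; have := f2_pos_inv f2p j.
  by rewrite /izz enc_iz enc_iS.
pose psi (j : 'I_n) (t : R) := zj j t / t ^+ 3.
have hpsi j (s : R) : 0 < s < 1 -> is_derive s (1 : R) (psi j) 0.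
  move=> hs; have [s0 s1] := andP hs.
  have h := der_div3 (lt0r_neq0 s0) (hdz j s hs).
  apply: (is_derive_eq h); field; by rewrite gt_eqF.
pose a (j : 'I_n) := psi j (2^-1).
have half0 : 0 < (2^-1 : R) by rewrite invr_gt0.
have half1 : (2^-1 : R) < 1 by rewrite invf_lt1 // ltr1n.
have hz j (s : R) : 0 < s < 1 -> zj j s = a j * s ^+ 3.
  move=> hs; have [s0 s1] := andP hs.
  suff e : psi j s = a j.
    by rewrite -e /psi mulfVK // expf_neq0 // gt_eqF.
  rewrite /a; case: (lerP s (2^-1)) => h.
  - apply: esym; apply: (const_seg (df := fun _ => 0)) => //.
    + move=> t /andP [t0 t1]; apply: hpsi; rewrite (lt_le_trans s0 t0) /=.
      exact: le_lt_trans t1 half1.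
  - apply: (const_seg (df := fun _ => 0)) => //; first exact: ltW.
    move=> t /andP [t0 t1]; apply: hpsi; rewrite (lt_le_trans half0 t0) /=.
    exact: le_lt_trans t1 s1.
have hV j (s : R) : 0 < s < 1 -> V s (lshift 1 j) ord0 = 3 * zj j s / s.
  move=> hs; have [s0 s1] := andP hs.
  rewrite /V Vz_nZ ?nZ //.
  have [_ f2p] := hE s hs; have := f2_pos_inv f2p j.
  by rewrite /izz enc_iz enc_iS.
have hz1 j : zj j 1 = a j.
  pose g (t : R) := zj j t - a j * t ^+ 3.
  pose dg (t : R) := V t (lshift 1 j) ord0 - a j * (3%:R * t ^+ 3.-1).
  have : g 1 = g (2^-1).
    apply: (const_seg (df := dg)); first exact: ltW.
    - move=> t /andP [t0 t1].
      have h1 := mx_der_comp (hdV t (ltac:(rewrite t1 (le_trans _ t0) // ltW //))) (lshift 1 j) ord0.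
      exact: (@is_deriveB R R R (zj j) (fun t => a j * t ^+ 3) t 1 _ _ h1 (der_monom (a j) 3 t)).
    - move=> t /andP [t0 t1]; have ht : 0 < t < 1 by rewrite t1 (lt_trans half0 t0).
      rewrite /dg hV // hz //; field; by rewrite lt0r_neq0 // (lt_trans half0 t0).
  have hh : (0 < (2^-1 : R) < 1) by rewrite half0 half1.
  rewrite /g (hz j (2^-1) hh).
  by rewrite subrr expr1n mulr1 => /eqP; rewrite subr_eq0 => /eqP.
pose w := fun i : 'I_(m + n) => match fintype.split i with inl j => x j ord0 | inr j => a j end.
have hPg : Pg w.
  apply/boolp.notP => hn.
  have [s0 s0p Hs0] := Cf1 hn.
  pose s := Num.min s0 (2^-1).
  have sp : 0 < s by rewrite lt_min s0p half0.
  have s1 : s < 1 by apply: le_lt_trans half1; rewrite ge_min lexx orbT.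
  have [hf1 _] := hE s (ltac:(rewrite sp s1 //)).
  move/eqP: hf1; apply; apply: Hs0; rewrite ?vS // ?ge_min ?lexx //.
  apply: funext => i; rewrite Tp_enc /w; case: (fintype.split i) => // j.
  by rewrite -/(zj j s) hz ?sp ?s1 // mulfK // expf_neq0 // lt0r_neq0.
move: hPg; rewrite /Pg.
have -> : \col_(i < m) w (lshift n i) = x.
  by apply/matrixP => i k; rewrite (ord1 k) mxE /w (unsplitK (inl i : 'I_m + 'I_n)).
move=> ->; apply/matrixP => i k; rewrite (ord1 k) !mxE /w (unsplitK (inr i : 'I_m + 'I_n)).
by rewrite -hz1.
Qed.
End Net.

End P4.
Import P4.

Unset Implicit Arguments.
Theorem mainTheorem5 (R : realType) (m n : nat) (uF : R) (F : 'cV[R]_m -> 'cV[R]_n) :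
  0 < uF ->
  continuous F ->
  (forall (x : 'cV[R]_m) (i : 'I_n), - uF < F x i ord0 < uF) ->
  semialgebraic_fun F ->
  exists (Nn : net R m n 1) (cmax : R),
    ISDnet Nn /\ 0 < cmax /\
    forall x : 'cV[R]_m, SANN_lim_eq Nn x cmax (F x).
Proof.
move=> uFp _ Fb Fsa.
have [_ [f1 [If1 [nf1 [Sf1 Cf1]]]]] := RF_sa Fsa.
have [g [Ig Eg]] := @ISD_mulp R _ _ (pX R (iS m n) + pX R (iS m n)) (ISD_qf uF If1).
have sqfE (v : 'I_(m + (n + 1) + 1) -> R) : 0 <= v (iS m n) ->
    g v = 2 * v (iS m n) * qf uF f1 v.
  move=> h; rewrite Eg; first by rewrite pDE pXE; ring.
  by rewrite pDE pXE addr_ge0.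
exists (Nnet uF f1 g), (cmax uF); split; first exact: Nnet_ISD.
split; first exact: cmax_gt0.
move=> x; split; first by exists (zt F x); apply: exist_sol.
by move=> z hz; apply: (uniq_sol uFp nf1 sqfE Cf1 hz).
Qed.
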